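(* Let $\Lambda$ be an essential row-finite 2-graph and let $\mathcal G=\{\mathcal G^j_v: v\in\Lambda^0, 1\le j\le m(v)\}$ be an insplitting partition of its 1-skeleton satisfying the pairing condition. Then the quotient $\Lambda_I=G_I^*/\sim_I$ of the path category of the insplit 2-colored graph $G_I$ is a 2-graph.
   Context: A 2-graph is a countable category $\Lambda$ with a functor $d:\Lambda\to\mathbb N^2$ with unique factorization (if $d(\lambda)=m+n$ there are unique $\mu,\nu$ with $d(\mu)=m,d(\nu)=n,\lambda=\mu\nu$; composition $\mu\nu$ when $s(\mu)=r(\nu)$). $\Lambda^m=d^{-1}(m)$, $\Lambda^0$ are the vertices, $\Lambda^1=\Lambda^{\varepsilon_1}\sqcup\Lambda^{\varepsilon_2}$; row-finite: $v\Lambda^m$ finite; essential: $v\Lambda^m$ and $\Lambda^mv$ nonempty for all $v,m$. The 1-skeleton is the 2-colored graph $G=(\Lambda^0,\Lambda^1,r,s)$; $\Lambda$ is the quotient of its path category by the relation $\sim$ generated by commuting squares $fg\sim ab$ (two-colored paths equal in $\Lambda$). An insplitting partition: for each $v\in\Lambda^0$, a partition of $v\Lambda^1=r^{-1}(v)\cap\Lambda^1$ into nonempty sets $\mathcal G^1_v,\dots,\mathcal G^{m(v)}_v$, satisfying the pairing condition: whenever $a,f\in v\Lambda^1$ and there exist edges $g,b$ with $ag\sim fb$, then $f\in\mathcal G^j_v$ iff $a\in\mathcal G^j_v$. The insplit 2-colored graph $G_I$: vertices $v^i$ ($1\le i\le m(v)$); edges $f^i$ ($f\in\Lambda^1$,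 $1\le i\le m(s(f))$), color $d(f^i)=d(f)$, $s(f^i)=s(f)^i$, $r(f^i)=r(f)^j$ where $f\in\mathcal G^j_{r(f)}$. $\sim_I$ is the equivalence relation on paths of $G_I$ (each vertex/edge equivalent only to itself, compatible with concatenation) generated by the commuting squares $f^ig^k\sim_I a^jb^k$ iff $g\in\mathcal G^i_{s(f)}$, $b\in\mathcal G^j_{s(a)}$ and $fg\sim ab$ in $\Lambda$. *)

(* Defs.v *)
From mathcomp Require Import all_boot.
From Stdlib Require Import Relations.
Set Implicit Arguments.
Unset Strict Implicit.
Unset Printing Implicit Defensive.

Definition deg2 := (nat * nat)%type.
Definition dadd (m n : deg2) : deg2 := (m.1 + n.1, m.2 + n.2)%N.
Definition eps1 : deg2 := (1, 0)%N.
Definition eps2 : deg2 := (0, 1)%N.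

(** A 2-graph: a countable category (composition [comp mu nu] = "mu nu",
    meaningful when [s mu = r nu]) with a degree functor to N^2 having
    the unique factorization property. *)
Record two_graph := TwoGraph {
  Obj : countType;
  Mor : countType;
  tg_r : Mor -> Obj;
  tg_s : Mor -> Obj;
  tg_id : Obj -> Mor;
  tg_comp : Mor -> Mor -> Mor;
  tg_d : Mor -> deg2;
  tg_r_id : forall v, tg_r (tg_id v) = v;
  tg_s_id : forall v, tg_s (tg_id v) = v;
  tg_r_comp : forall mu nu, tg_s mu = tg_r nu -> tg_r (tg_comp mu nu) = tg_r mu;
  tg_s_comp : forall mu nu, tg_s mu = tg_r nu -> tg_s (tg_comp mu nu) = tg_s nu;
  tg_id_l : forall mu, tg_comp (tg_id (tg_r mu)) mu = mu;
  tg_id_r : forall mu, tg_comp mu (tg_id (tg_s mu)) = mu;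
  tg_assoc : forall la mu nu, tg_s la = tg_r mu -> tg_s mu = tg_r nu ->
      tg_comp (tg_comp la mu) nu = tg_comp la (tg_comp mu nu);
  tg_d_id : forall v, tg_d (tg_id v) = (0, 0)%N;
  tg_d_comp : forall mu nu, tg_s mu = tg_r nu ->
      tg_d (tg_comp mu nu) = dadd (tg_d mu) (tg_d nu);
  tg_fact : forall la m n, tg_d la = dadd m n ->
      exists mu nu, [/\ tg_s mu = tg_r nu, tg_d mu = m, tg_d nu = n
                      & la = tg_comp mu nu];
  tg_fact_uniq : forall mu nu mu' nu',
      tg_s mu = tg_r nu -> tg_s mu' = tg_r nu' ->
      tg_d mu = tg_d mu' -> tg_d nu = tg_d nu' ->
      tg_comp mu nu = tg_comp mu' nu' -> mu = mu' /\ nu = nu'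
}.

Section TwoGraphNotions.
Variable L : two_graph.
Local Notation r := (@tg_r L).
Local Notation s := (@tg_s L).
Local Notation d := (@tg_d L).
Local Notation comp := (@tg_comp L).

Definition is_edge (f : Mor L) : Prop := d f = eps1 \/ d f = eps2.

Definition row_finite : Prop :=
  forall (v : Obj L) (m : deg2), exists S : seq (Mor L),
    forall la, r la = v -> d la = m -> la \in S.

Definition essential : Prop :=
  forall (v : Obj L) (m : deg2),
    (exists la, r la = v /\ d la = m) /\ (exists la, s la = v /\ d la = m).

(** An insplitting partition, blocks indexed 0 <= j < m(v) (the paper's
    1 <= j <= m(v)); [part f] is the index j with f in G^j_{r(f)}. *)
Definition insplitting_partition (mv : Obj L -> nat) (part : Mor L -> nat)
  : Prop :=
  (forall f, is_edge f -> (part f < mv (r f))%N) /\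
  (forall v j, (j < mv v)%N -> exists f, [/\ is_edge f, r f = v & part f = j]).

Definition pairing_condition (part : Mor L -> nat) : Prop :=
  forall a f g b, is_edge a -> is_edge f -> is_edge g -> is_edge b ->
    r a = r f -> s a = r g -> s f = r b -> comp a g = comp f b ->
    part a = part f.

Definition IV := (Obj L * nat)%type.
Definition IE := (Mor L * nat)%type.
Definition validV (mv : Obj L -> nat) (x : IV) : Prop := (x.2 < mv x.1)%N.
Definition validE (mv : Obj L -> nat) (e : IE) : Prop :=
  is_edge e.1 /\ (e.2 < mv (s e.1))%N.
Definition rI (part : Mor L -> nat) (e : IE) : IV := (r e.1, part e.1).
Definition sI (e : IE) : IV := (s e.1, e.2).
Definition colI (e : IE) : deg2 := d e.1.

Definition squareI (mv : Obj L -> nat) (part : Mor L -> nat)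
  (x y x' y' : IE) : Prop :=
  let: (f, i) := x in let: (g, k) := y in
  let: (a, j) := x' in let: (b, k') := y' in
  k = k' /\ validE mv x /\ validE mv y /\ validE mv x' /\ validE mv y' /\
  part g = i /\ part b = j /\
  s f = r g /\ s a = r b /\ comp f g = comp a b.

End TwoGraphNotions.

(** A path is a range vertex
    together with its list of edges e1 ... en (r(path) = r(e1)). *)
Section Paths.
Variables (V E : Type) (validV : V -> Prop) (validE : E -> Prop)
  (r s : E -> V) (col : E -> deg2).

Definition gpath := (V * seq E)%type.

Fixpoint chain (v : V) (es : seq E) : Prop :=
  match es with
  | [::] => True
  | e :: es' => [/\ validE e, r e = v & chain (s e) es']
  end.

Definition valid_path (p : gpath) : Prop := validV p.1 /\ chain p.1 p.2.

Fixpoint end_vertex (v : V) (es : seq E) : V :=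
  match es with [::] => v | e :: es' => end_vertex (s e) es' end.

Definition psrc (p : gpath) : V := end_vertex p.1 p.2.
Definition prng (p : gpath) : V := p.1.

Definition pconcat (p q : gpath) : gpath := (p.1, p.2 ++ q.2).

Definition pdeg (p : gpath) : deg2 :=
  foldr (fun e acc => dadd (col e) acc) (0, 0)%N p.2.

Variable square : E -> E -> E -> E -> Prop.

Inductive sq_step : gpath -> gpath -> Prop :=
| SqStep v pre x y x' y' post : square x y x' y' ->
    sq_step (v, pre ++ [:: x; y] ++ post) (v, pre ++ [:: x'; y'] ++ post).

Definition sq_equiv : gpath -> gpath -> Prop := clos_refl_sym_trans _ sq_step.

(** The quotient G^* / sq_equiv is a 2-graph: the relation is compatible
    with range, source and degree (so the quotient is a category with a
    well-defined degree functor), and the degree functor has unique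
    factorization on equivalence classes. *)
Definition quotient_is_2graph : Prop :=
  (forall p q, valid_path p -> sq_equiv p q ->
     [/\ valid_path q, prng q = prng p, psrc q = psrc p & pdeg q = pdeg p]) /\
  (forall p m n, valid_path p -> pdeg p = dadd m n ->
     exists q1 q2, valid_path q1 /\ valid_path q2 /\ psrc q1 = prng q2 /\
                   pdeg q1 = m /\ pdeg q2 = n /\ sq_equiv (pconcat q1 q2) p) /\
  (forall q1 q2 q1' q2', valid_path q1 -> valid_path q2 ->
     valid_path q1' -> valid_path q2' ->
     psrc q1 = prng q2 -> psrc q1' = prng q2' ->
     pdeg q1 = pdeg q1' -> pdeg q2 = pdeg q2' ->
     sq_equiv (pconcat q1 q2) (pconcat q1' q2') ->
     sq_equiv q1 q1' /\ sq_equiv q2 q2').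

End Paths.

Definition insplit_is_2graph (L : two_graph) (mv : Obj L -> nat)
  (part : Mor L -> nat) : Prop :=
  @quotient_is_2graph (IV L) (IE L) (validV mv) (validE mv)
    (rI part) (@sI L) (@colI L) (squareI mv part).

(* Main.v *)
Require Import Defs.
From mathcomp Require Import all_boot.
From Stdlib Require Import Relations Setoid.
Set Implicit Arguments.
Unset Strict Implicit.
Unset Printing Implicit Defensive.

Section Proof5p8.
Variables (L : two_graph) (mv : Obj L -> nat) (part : Mor L -> nat).
Hypothesis Hpart : insplitting_partition mv part.
Hypothesis Hpair : pairing_condition part.

Local Notation E := (IE L).
Local Notation V := (IV L).
Local Notation ch := (@chain V E (validE mv) (rI part) (@sI L)).
Local Notation ev := (@end_vertex V E (@sI L)).
Local Notation sq := (squareI mv part).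
Local Notation step := (@sq_step V E sq).
Local Notation equiv := (@sq_equiv V E sq).
Local Notation deg := (@pdeg V E (@colI L)).
Local Notation r := (@tg_r L).
Local Notation s := (@tg_s L).
Local Notation d := (@tg_d L).
Local Notation comp := (@tg_comp L).

Fixpoint CF (w : V) (es : seq E) : Mor L :=
  match es with [::] => tg_id w.1 | e :: es' => comp e.1 (CF (sI e) es') end.

Lemma chain_cat v a b : ch v (a ++ b) <-> ch v a /\ ch (ev v a) b.
Proof.
elim: a v => [|e a IH] v /=; first by tauto.
split.
  by move=> [H1 H2 /IH [H3 H4]].
by move=> [[H1 H2 H3] H4]; split => //; apply/IH.
Qed.

Lemma ev_cat v a b : ev v (a ++ b) = ev (ev v a) b.
Proof. by elim: a v => //= e a IH v; rewrite IH. Qed.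

Lemma edge_deg f : is_edge f -> d f = eps1 \/ d f = eps2.
Proof. by []. Qed.

Lemma CF_props w es : ch w es ->
  [/\ r (CF w es) = w.1, s (CF w es) = (ev w es).1 & d (CF w es) = deg (w, es)].
Proof.
elim: es w => [|e es IH] w /=.
  by rewrite tg_r_id tg_s_id tg_d_id.
move=> [_ Hr Hc]; have [H1 H2 H3] := IH _ Hc.
have Hse : s e.1 = r (CF (sI e) es) by rewrite H1.
split.
- by rewrite tg_r_comp // -Hr.
- by rewrite tg_s_comp.
- by rewrite tg_d_comp // H3.
Qed.

Lemma CF_cat w a b : ch w (a ++ b) ->
  CF w (a ++ b) = comp (CF w a) (CF (ev w a) b).
Proof.
elim: a w => [|e a IH] w /=.
  by move=> Hc; have [H1 _ _] := CF_props Hc; rewrite -H1 tg_id_l.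
move=> [_ _ Hc]; rewrite IH //.
move: Hc => /chain_cat [Ha Hb].
have [A1 A2 _] := CF_props Ha; have [B1 _ _] := CF_props Hb.
rewrite tg_assoc //; by [rewrite A1 | rewrite A2 B1].
Qed.

Lemma dadd_assoc a b c : dadd a (dadd b c) = dadd (dadd a b) c.
Proof. by rewrite /dadd /= !addnA. Qed.

Lemma dadd_comm a b : dadd a b = dadd b a.
Proof. by rewrite /dadd addnC [b.2 + _]addnC. Qed.

Lemma square_props x y x' y' : sq x y x' y' ->
  rI part x = rI part x' /\ sI y = sI y' /\ validE mv x /\ validE mv y /\
      validE mv x' /\ validE mv y' /\
      sI x = rI part y /\ sI x' = rI part y' /\
      s x.1 = r y.1 /\ s x'.1 = r y'.1 /\
      comp x.1 y.1 = comp x'.1 y'.1.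
Proof.
case: x => f i; case: y => g k; case: x' => a j; case: y' => b k'.
move=> [<- [vx [vy [vx' [vy' [Hi [Hj [Hfg [Hab Hc]]]]]]]]] /=.
have Hra : r f = r a by rewrite -(tg_r_comp Hfg) -(tg_r_comp Hab) Hc.
have Hsg : s g = s b by rewrite -(tg_s_comp Hfg) -(tg_s_comp Hab) Hc.
split.
  rewrite /rI /= Hra; congr (_, _).
  apply: (Hpair (g := g) (b := b)); try by [case: vx | case: vx' | case: vy | case: vy'].
split; first by rewrite /sI /= Hsg.
do 4 (split; first by []).
split; first by rewrite /sI /rI /= Hfg Hi.
split; first by rewrite /sI /rI /= Hab Hj.
by [].
Qed.
Lemma CF_congr w pre l l' : CF (ev w pre) l = CF (ev w pre) l' ->
  CF w (pre ++ l) = CF w (pre ++ l').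
Proof. by elim: pre w => [|e pre IH] w //= H; rewrite IH. Qed.

Lemma step_inv p q : step p q ->
  p.1 = q.1 /\ ev p.1 p.2 = ev q.1 q.2 /\ deg p = deg q /\
  (ch p.1 p.2 <-> ch q.1 q.2) /\ (ch p.1 p.2 -> CF p.1 p.2 = CF q.1 q.2).
Proof.
case=> v pre x y x' y' post Hsq.
have [Hr [Hs [vx [vy [vx' [vy' [Hxy [Hxy' [Hfg [Hab Hc]]]]]]]]]] := square_props Hsq.
split => //=.
split; first by rewrite !ev_cat /= Hs.
split.
  by rewrite /pdeg /= !foldr_cat /= !dadd_assoc /colI -!tg_d_comp // Hc.
split.
  split; move=> /chain_cat [Hp /= [_ H1 [_ _ H2]]]; apply/chain_cat; split => //=.
    by split => //; [rewrite -Hr | split => //; rewrite -Hs].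
  by split => //; [rewrite Hr | split => //; rewrite Hs].
move=> /chain_cat [_ /= [_ _ [_ _ Hpost]]].
apply: CF_congr => /=.
have [P1 _ _] := CF_props Hpost.
have Hgs : s y.1 = r (CF (sI y) post) by rewrite P1.
have Hbs : s y'.1 = r (CF (sI y) post) by rewrite P1 Hs.
rewrite -tg_assoc // Hc tg_assoc //; try by rewrite Hs.
Qed.
Lemma equiv_inv p q : equiv p q ->
  p.1 = q.1 /\ ev p.1 p.2 = ev q.1 q.2 /\ deg p = deg q /\
  (ch p.1 p.2 <-> ch q.1 q.2) /\ (ch p.1 p.2 -> CF p.1 p.2 = CF q.1 q.2).
Proof.
elim=> {p q}.
- by move=> p q /step_inv.
- by move=> p; do !split.
- move=> p q _ [H1 [H2 [H3 [[H4 H4'] H5]]]].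
  split; first by [].
  split; first by [].
  split; first by [].
  split; first by split.
  by move=> Hq; rewrite H5 //; apply: H4'.
- move=> p q t _ [H1 [H2 [H3 [H4 H5]]]] _ [K1 [K2 [K3 [K4 K5]]]].
  split; first by rewrite H1.
  split; first by rewrite H2.
  split; first by rewrite H3.
  split; first by split => [/H4 /K4|/K4 /H4].
  by move=> Hp; rewrite H5 // K5 //; apply/H4.
Qed.

Lemma equiv_lift p q : equiv p q -> forall v pre post,
  equiv (v, pre ++ p.2 ++ post) (v, pre ++ q.2 ++ post).
Proof.
elim=> {p q}.
- move=> p q [w pre' x y x' y' post' Hsq] v pre post /=.
  apply: rst_step.
  have -> : pre ++ (pre' ++ [:: x; y] ++ post') ++ post =
            (pre ++ pre') ++ [:: x; y] ++ (post' ++ post) by rewrite !catA.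
  have -> : pre ++ (pre' ++ [:: x'; y'] ++ post') ++ post =
            (pre ++ pre') ++ [:: x'; y'] ++ (post' ++ post) by rewrite !catA.
  by constructor.
- by move=> p v pre post; apply: rst_refl.
- by move=> p q _ IH v pre post; apply: rst_sym; apply: IH.
- by move=> p q t _ IH1 _ IH2 v pre post; exact: rst_trans (IH1 v pre post) (IH2 v pre post).
Qed.

Lemma swap x y : validE mv x -> validE mv y -> sI x = rI part y ->
  exists x' y', sq x y x' y' /\ colI x' = colI y /\ colI y' = colI x.
Proof.
case: x => f i; case: y => g k [ef vf] [eg vg] [Hfg Hi] /=.
have Hd : d (comp f g) = dadd (d g) (d f) by rewrite tg_d_comp // dadd_comm.
have [a [b [Hab Ha Hb Hc]]] := tg_fact Hd.
have ea : is_edge a by rewrite /is_edge Ha.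
have eb : is_edge b by rewrite /is_edge Hb.
have Hsb : s b = s g by rewrite -(tg_s_comp Hab) -Hc tg_s_comp.
exists (a, part b), (b, k); split; last by rewrite /colI /= Ha Hb.
do 3 (split => //).
split; first by split => //=; rewrite Hab; exact: Hpart.1.
split; first by split => //=; rewrite Hsb.
by do 5 (split => //).
Qed.
Lemma bubble v pre : forall e post, ch v (pre ++ e :: post) ->
  exists e' rest, equiv (v, pre ++ e :: post) (v, e' :: rest) /\
    colI e' = colI e /\ map (@colI L) rest = map (@colI L) pre ++ map (@colI L) post.
Proof.
elim/last_ind: pre => [|pre x IH] e post Hc.
  by exists e, post; split; [apply: rst_refl | split].
move: Hc; rewrite cat_rcons => Hc.
have /chain_cat [_ /= [vx _ [ve Hxe _]]] := Hc.
have [x' [y' [Hsq [Hc1 Hc2]]]] := swap vx ve (esym Hxe).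
have Hst : step (v, pre ++ [:: x; e] ++ post) (v, pre ++ [:: x'; y'] ++ post) by constructor.
have [_ [_ [_ [[Hch _] _]]]] := step_inv Hst.
have Hc' : ch v (pre ++ x' :: y' :: post) by exact: Hch.
have [e' [rest [Heq [He' Hrest]]]] := IH _ _ Hc'.
exists e', rest; split.
  apply: (@rst_trans _ _ _ (v, pre ++ x' :: y' :: post)) => //.
  exact: rst_step.
split; first by rewrite He' Hc1.
by rewrite Hrest /= Hc2 map_rcons cat_rcons.
Qed.

Lemma sortpath cs : forall v es, ch v es -> perm_eq (map (@colI L) es) cs ->
  exists es', equiv (v, es) (v, es') /\ map (@colI L) es' = cs.
Proof.
elim: cs => [|c cs IH] v es Hc Hp.
  have := perm_size Hp; case: es Hc Hp => // _ _ _.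
  by exists [::]; split => //; apply: rst_refl.
have : c \in map (@colI L) es by rewrite (perm_mem Hp) mem_head.
case/mapP=> e He Hce.
case/splitPr: He Hc Hp => pre post Hc Hp.
have [e' [rest [Heq [He' Hrest]]]] := bubble Hc.
have [_ [_ [_ [[Hch _] _]]]] := equiv_inv Heq.
have /= [_ _ Hrc] := Hch Hc.
have Hp' : perm_eq (map (@colI L) rest) cs.
  rewrite -(perm_cons c) Hrest.
  apply: perm_trans _ Hp; rewrite map_cat /= Hce.
  by rewrite perm_sym perm_catC /= perm_cons perm_catC.
have [es'' [Heq' Hes'']] := IH _ _ Hrc Hp'.
exists (e' :: es''); split; last by rewrite /= He' Hes'' Hce.
apply: rst_trans Heq _.
by have := equiv_lift Heq' v [:: e'] [::]; rewrite /= !cats0.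
Qed.
Definition isc (c : deg2) : bool := (c == eps1) || (c == eps2).

Lemma chain_colors v es : ch v es -> all isc (map (@colI L) es).
Proof.
elim: es v => [|e es IH] v //= [[He _] _ Hc].
rewrite (IH _ Hc) andbT /isc /colI.
by case: He => ->; rewrite eqxx ?orbT.
Qed.

Lemma deg_map w es : deg (w, es) = foldr dadd (0, 0)%N (map (@colI L) es).
Proof. by rewrite /pdeg foldr_map. Qed.

Lemma foldr_count cs : all isc cs ->
  foldr dadd (0, 0)%N cs = (count_mem eps1 cs, count_mem eps2 cs).
Proof.
elim: cs => [|c cs IH] //= /andP [Hc Hcs]; rewrite IH //.
by case/orP: Hc => /eqP ->.
Qed.

Lemma canon cs : all isc cs ->
  perm_eq cs (nseq (count_mem eps1 cs) eps1 ++ nseq (count_mem eps2 cs) eps2).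
Proof.
elim: cs => [|c cs IH] //= /andP [Hc Hcs].
case/orP: Hc => /eqP -> /=.
  by rewrite perm_cons; apply: IH.
apply: perm_trans (_ : perm_eq _ (eps2 :: nseq (count_mem eps1 cs) eps1 ++
   nseq (count_mem eps2 cs) eps2)) _.
  by rewrite perm_cons; apply: IH.
by rewrite !add0n perm_sym perm_catC /= perm_cons perm_catC.
Qed.

Lemma perm_deg a b : all isc a -> all isc b ->
  foldr dadd (0, 0)%N a = foldr dadd (0, 0)%N b -> perm_eq a b.
Proof.
move=> Ha Hb; rewrite !foldr_count // => [[H1 H2]].
apply: perm_trans (canon Ha) _; rewrite perm_sym H1 H2; exact: canon.
Qed.

Lemma uniq_path es : forall v v' es', ch v es -> ch v' es' ->
  map (@colI L) es = map (@colI L) es' -> CF v es = CF v' es' -> ev v es = ev v' es' ->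
  (v, es) = (v', es').
Proof.
elim: es => [|e es IH] v v' [|e' es'] //= Hc Hc' Hm HC Hev.
  by rewrite Hev.
move: Hm => [Hce Hm].
case: Hc => [ve Hre Hc]; case: Hc' => [ve' Hre' Hc'].
have [A1 _ A3] := CF_props Hc; have [B1 _ B3] := CF_props Hc'.
have [He1 HCF] : e.1 = e'.1 /\ CF (sI e) es = CF (sI e') es'.
  apply: tg_fact_uniq => //.
  by rewrite A3 B3 !deg_map Hm.
have [Hs Hes] : sI e = sI e' /\ es = es'.
  by have H := IH _ _ _ Hc Hc' Hm HCF Hev; split; [exact: (f_equal fst H) | exact: (f_equal snd H)].
have He : e = e'.
  by rewrite [e]surjective_pairing [e']surjective_pairing He1 (f_equal snd Hs : e.2 = e'.2).
by rewrite -Hre -Hre' He Hes.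
Qed.

Lemma key p p' : ch p.1 p.2 -> ch p'.1 p'.2 -> deg p = deg p' ->
  CF p.1 p.2 = CF p'.1 p'.2 -> ev p.1 p.2 = ev p'.1 p'.2 -> equiv p p'.
Proof.
case: p => v es; case: p' => v' es' /= Hc Hc' Hd HC Hev.
have Hp : perm_eq (map (@colI L) es') (map (@colI L) es).
  apply: perm_deg; [exact: chain_colors Hc' | exact: chain_colors Hc |].
  by rewrite -(deg_map v es) -(deg_map v' es') Hd.
have [es'' [Heq Hm]] := sortpath Hc' Hp.
have [_ [Hev2 [_ [[Hch _] HCF]]]] := equiv_inv Heq.
have E : (v, es) = (v', es'').
  apply: uniq_path => //=.
  - exact: Hch.
  - by rewrite HC HCF.
  - by rewrite Hev Hev2.
rewrite E; apply: rst_sym; exact: Heq.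
Qed.
Lemma chain_validV w es : validV mv w -> ch w es -> validV mv (ev w es).
Proof. by elim: es w => [|e es IH] w //= _ [[_ He] _ Hc]; apply: IH. Qed.

Lemma foldr_nseq2 a b z :
  foldr dadd z (nseq a eps1 ++ nseq b eps2) = dadd (a, b) z.
Proof.
elim: a => [|a IH] /=.
  elim: b => [|b IH] /=; first by rewrite /dadd /= !add0n; case: z.
  by rewrite IH /dadd /= !add0n add1n.
by rewrite IH /dadd /= add1n !add0n.
Qed.

Lemma main_sec : insplit_is_2graph mv part.
Proof.
split; [|split].
- move=> [v es] [w fs] [Hv Hc] Heq.
  have [/= H1 [H2 [H3 [[H4 _] _]]]] := equiv_inv Heq.
  split => //; split; [by rewrite /= -H1 | exact: H4].
- move=> [v es] m n [Hv Hc] Hd.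
  set cs := (nseq m.1 eps1 ++ nseq m.2 eps2) ++ (nseq n.1 eps1 ++ nseq n.2 eps2).
  have Hall : all isc cs.
    by rewrite /cs !all_cat !all_nseq /isc !eqxx !orbT.
  have Hp : perm_eq (map (@colI L) es) cs.
    apply: perm_deg => //; first exact: chain_colors Hc.
    rewrite -(deg_map v es) Hd foldr_cat !foldr_nseq2.
    by case: m {cs Hall Hd} => m1 m2; case: n => n1 n2; rewrite /dadd /= !addn0.
  have [es' [Heq Hm]] := sortpath Hc Hp.
  have [_ [_ [_ [[Hch _] _]]]] := equiv_inv Heq.
  have Hc' : ch v es' := Hch Hc.
  set k := (m.1 + m.2)%N.
  have Hsz : size (nseq m.1 eps1 ++ nseq m.2 eps2) = k by rewrite size_cat !size_nseq.
  move: (Hc'); rewrite -(cat_take_drop k es') => /chain_cat [Ht Hdr].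
  exists (v, take k es'), (ev v (take k es'), drop k es').
  split; first by split.
  split; first by split => //; exact: chain_validV.
  split; first by [].
  split.
    rewrite deg_map map_take Hm /cs -Hsz take_size_cat // foldr_nseq2.
    by case: m {cs Hall Hd Hm Hsz Hp k Ht Hdr} => m1 m2; rewrite /dadd /= !addn0.
  split.
    rewrite deg_map map_drop Hm /cs -Hsz drop_size_cat // foldr_nseq2.
    by case: n {cs Hall Hd Hm Hsz Hp k Ht Hdr} => n1 n2; rewrite /dadd /= !addn0.
  rewrite /pconcat /= cat_take_drop; apply: rst_sym; exact: Heq.
- move=> [v1 es1] [v2 es2] [v1' es1'] [v2' es2'] [_ C1] [V2 C2] [_ C1'] [V2' C2'].
  rewrite /psrc /prng /pconcat /= => Hs Hs' Hd1 Hd2 Heq.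
  have Cc : ch v1 (es1 ++ es2) by apply/chain_cat; rewrite Hs.
  have Cc' : ch v1' (es1' ++ es2') by apply/chain_cat; rewrite Hs'.
  have [/= _ [Hev [_ [_ HCF]]]] := equiv_inv Heq.
  have HCF' := HCF Cc.
  rewrite !CF_cat // Hs Hs' in HCF'.
  have [P1 P2 P3] := CF_props C1; have [Q1 Q2 Q3] := CF_props C2.
  have [P1' P2' P3'] := CF_props C1'; have [Q1' Q2' Q3'] := CF_props C2'.
  have [E1 E2] : CF v1 es1 = CF v1' es1' /\ CF v2 es2 = CF v2' es2'.
    apply: tg_fact_uniq => //.
    - by rewrite P2 Q1 Hs.
    - by rewrite P2' Q1' Hs'.
    - by rewrite P3 P3'.
    - by rewrite Q3 Q3'.
  have Hev2 : ev v2 es2 = ev v2' es2'.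
    by rewrite -Hs -Hs' -!ev_cat.
  have Heq2 : equiv (v2, es2) (v2', es2') by apply: key.
  have [/= Hv2 _] := equiv_inv Heq2.
  split => //; apply: key => //=.
  by rewrite Hs Hs'.
Qed.
End Proof5p8.

Theorem theorem5p8 (L : two_graph) (mv : Obj L -> nat) (part : Mor L -> nat) :
  row_finite L -> essential L ->
  insplitting_partition mv part -> pairing_condition part ->
  insplit_is_2graph mv part.
Proof. by move=> _ _ Hp Hq; exact: main_sec. Qed.
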